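(* Let $\operatorname{rk}L=2$ with basis $e_1,e_2$, $x_i=X^{f_i}$ for the dual basis, $k=\omega(e_1,e_2)\neq0$, and let $m_1\ge1$, $m_2\ge0$. Let $\Sigma=\{m_1\times e_2,\ m_2\times(-e_2)\}$ and let $\Sigma'=\{(m_1-1)\times e_2,\ (m_2+1)\times(-e_2)\}$ be its mutation in (one copy of) $e_2$. Then $\mathcal U(\Sigma)=\mu_{e_2}^*\bigl(\mathcal U(\Sigma')\bigr)$, where $\mu_{e_2}^*$ is the substitution $x_1\mapsto x_1$, $x_2\mapsto x_2/(1+x_1^k)$.
   Context: For a lattice $L$ with skew-symmetric integral bilinear form $\omega$: $L^*=\mathrm{Hom}(L,\mathbb Z)$, $(\cdot,\cdot)$ the canonical pairing; $\mathcal Q=\mathbb Q(e^{2\pi i\mathbb Q})$ is $\mathbb Q$ with all roots of unity adjoined; $\mathcal Q[L^*]$ is the group algebra of $L^*$ with monomials $X^m$, and $\mathbb K_L$ its fraction field. For $v\in L$, $\mu_v^*$ is the $\mathcal Q$-algebra automorphism of $\mathbb K_L$ with $\mu_v^*(X^m)=X^m(1+X^{\omega(\cdot,v)})^{-(m,v)}$, where $\omega(\cdot,v)\in L^*$ is $w\mapsto\omega(w,v)$. An exchange collection is a finite tuple of vectors with multiplicity function $m_V$; $\{m_1\times u_1,m_2\times u_2\}$ denotes the collection with $u_j$ of multiplicity $m_j$. The upper bound is $\mathcal U(V)=\mathcal Q[L^*]\cap\bigcap_{v\in L}(\mu_v^* )^{m_V(v)}(\mathcal Q[L^*])\subset\mathbb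 K_L$. *)

(* Defs.v *)
From HB Require Import structures.
From mathcomp Require Import all_boot all_order all_algebra.
Set Implicit Arguments. Unset Strict Implicit. Unset Printing Implicit Defensive.
Import Order.TTheory GRing.Theory Num.Theory.
Local Open Scope ring_scope.

(* Rank-2 lattice L = Z^2 with basis e1=(1,0), e2=(0,1); L^* = Z^2 with the
   dual basis f1, f2.  The skew form is omega(w,v) = k (w1 v2 - w2 v1),
   so omega(e1,e2) = k.  The group algebra F[L^*] is the ring of Laurent
   polynomials in x1 = X^{f1}, x2 = X^{f2}; its fraction field K_L is
   realised as the fraction field of F[x1][x2] = {poly {poly F}}. *)

Section Defs.
Variable F : fieldType.

Definition Rpol := {poly {poly F}}.
Definition KL := {fraction Rpol}.

Definition x1 : KL := tofrac (('X : {poly F})%:P : Rpol).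
Definition x2 : KL := tofrac ('X : Rpol).

Definition mono (m : int * int) : KL := x1 ^ m.1 * x2 ^ m.2.

(* omega(., v) as an element of L^* (coordinates in the dual basis) *)
Definition omega_v (k : int) (v : int * int) : int * int :=
  (k * v.2, - (k * v.1)).

Definition pairing (m v : int * int) : int := m.1 * v.1 + m.2 * v.2.

(* image of X^{f_i} under mu_v^star *)
Definition muimg (k : int) (v m : int * int) : KL :=
  mono m * (1 + mono (omega_v k v)) ^ (- pairing m v).

Definition subst2 (y1 y2 : KL) (p : Rpol) : KL :=
  \sum_(i < size p) \sum_(j < size p`_i)
     tofrac (((p`_i)`_j)%:P%:P : Rpol) * y1 ^+ j * y2 ^+ i.

(* mu_v^star : the automorphism of K_L with mu_v^star(X^m) = X^m (1+X^{omega(.,v)})^{-(m,v)},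
   i.e. the substitution x_i |-> mu_v^star(X^{f_i}), applied to a representative
   fraction p/q. *)
Definition mu (k : int) (v : int * int) (f : KL) : KL :=
  let y1 := muimg k v (1, 0) in
  let y2 := muimg k v (0, 1) in
  subst2 y1 y2 \n_(repr f) / subst2 y1 y2 \d_(repr f).

Definition laurent (f : KL) : Prop :=
  exists (p : Rpol) (n : nat), f = tofrac p / (x1 * x2) ^+ n.

Definition in_mu_pow_image (k : int) (v : int * int) (n : nat) (f : KL) : Prop :=
  exists g : KL, laurent g /\ f = iter n (mu k v) g.

(* the upper bound U(V) for an exchange collection given by its
   multiplicity function mV : L -> nat *)
Definition upper_bound (k : int) (mV : int * int -> nat) (f : KL) : Prop :=
  laurent f /\ forall v : int * int, in_mu_pow_image k v (mV v) f.

End Defs.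

(* the exchange collection { a x e2, b x (-e2) } *)
Definition coll_e2 (a b : nat) (v : int * int) : nat :=
  if v == (0%R, 1%R) then a else if v == (0%R, (-1)%R) then b else 0%N.

(* Main.v *)
Require Import Defs.
From HB Require Import structures.
From mathcomp Require Import all_boot all_order all_algebra.
From mathcomp Require Import ring zify.
Import GRing.Theory Num.Theory.
Set Implicit Arguments. Unset Strict Implicit. Unset Printing Implicit Defensive.
Local Open Scope ring_scope.
Local Open Scope quotient_scope.

Lemma fracE (R: idomainType) (x : {fraction R}) : x = tofrac (\n_(repr x)) / tofrac (\d_(repr x)).
Proof.
rewrite -{1}[x]reprK.
case: (repr x) => [[n d] /= dn].
unlock tofrac.
rewrite -[_^-1]FracField.pi_inv -[_ * _]FracField.pi_mul.
apply/eqmodP => /=. rewrite FracField.equivfE /FracField.mulf /FracField.invf /=.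
by rewrite !numden_Ratio ?(oner_neq0, mul1r, mulr1) // mulrC.
Qed.

Section Main.
Variable F : fieldType.
Local Notation KL := (KL F).
Local Notation Rpol := (Rpol F).
Local Notation x1 := (x1 F).
Local Notation x2 := (x2 F).

Definition C : {poly F} -> KL := (@tofrac Rpol) \o (@polyC {poly F}).
HB.instance Definition _ := GRing.RMorphism.copy C C.
Lemma Ccomm (y : KL) : commr_rmorph C y.
Proof. by move=> a; rewrite /GRing.comm mulrC. Qed.
Definition Sy (y : KL) : Rpol -> KL := horner_morph (Ccomm y).
Lemma SyE y p : Sy y p = \sum_(i < size p) C p`_i * y ^+ i.
Proof.
rewrite /Sy /horner_morph horner_coef size_map_inj_poly; first last.
- exact: rmorph0.
- by move=> a b; rewrite /C /= => /eqP; rewrite tofrac_eq => /eqP /polyC_inj.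
by apply: eq_bigr => i _; rewrite coef_map.
Qed.
Lemma C_expand (u : {poly F}) : \sum_(j < size u) tofrac ((u`_j)%:P%:P : Rpol) * x1 ^+ j = C u.
Proof.
rewrite /x1 /C /= -[in RHS](coefK u) poly_def !rmorph_sum /=.
by apply: eq_bigr => j _; rewrite -mul_polyC !rmorphM !rmorphXn.
Qed.
Lemma subst2E y p : subst2 x1 y p = Sy y p.
Proof.
rewrite SyE /subst2; apply: eq_bigr => i _.
by rewrite -mulr_suml C_expand.
Qed.
Lemma tofrac_expand (p : Rpol) : tofrac p = Sy x2 p.
Proof.
rewrite SyE /x2 -[in LHS](coefK p) poly_def rmorph_sum /=.
by apply: eq_bigr => j _; rewrite -mul_polyC rmorphM rmorphXn.
Qed.
Lemma SyE_wide y (p : Rpol) D : (size p <= D)%N -> Sy y p = \sum_(i < D) C p`_i * y ^+ i.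
Proof.
move=> hD; rewrite /Sy /horner_morph (horner_coef_wide _ (_ : size (map_poly C p) <= D)%N); last first.
  rewrite size_map_inj_poly ?rmorph0 //.
  by move=> a b; rewrite /C /= => /eqP; rewrite tofrac_eq => /eqP /polyC_inj.
by apply: eq_bigr => i _; rewrite coef_map.
Qed.
Lemma tofrac_poly D (E : nat -> {poly F}) :
  tofrac (\poly_(i < D) E i : Rpol) = \sum_(i < D) C (E i) * x2 ^+ i.
Proof.
rewrite poly_def rmorph_sum /=.
by apply: eq_bigr => j _; rewrite -mul_polyC rmorphM rmorphXn.
Qed.
Lemma C_neq0 u : u != 0 -> C u != 0.
Proof. by move=> hu; rewrite /C /= tofrac_eq0 polyC_eq0. Qed.
Lemma Sform (u v : {poly F}) (p : Rpol) D : v != 0 -> (size p <= D)%N ->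
  Sy (x2 * (C u / C v)) p =
  tofrac (\poly_(i < D) (p`_i * u ^+ i * v ^+ (D - i)) : Rpol) / C v ^+ D.
Proof.
move=> hv hD; rewrite (SyE_wide _ hD) tofrac_poly mulr_suml.
apply: eq_bigr => [[i hi]] _ /=.
have hCv := C_neq0 hv.
rewrite !rmorphM !rmorphXn /=.
rewrite -[in C v ^+ D](subnKC (ltnW hi)) exprD.
rewrite exprMn expr_div_n.
have hw : C v ^+ (D - i) != 0 by rewrite expf_neq0.
move: hw; move: (C v ^+ (D - i)) (C v ^+ i) (C u ^+ i) (x2 ^+ i) (C p`_i) => w a b c d hw.
rewrite [in RHS]invfM [in RHS](mulrC a^-1) [in RHS]mulrA [in RHS](mulrAC _ w c) [in RHS]mulfK //.
by rewrite !mulrA (mulrAC d c b).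
Qed.
Record rr := RR { ru : {poly F}; rv : {poly F}; ru_nz : ru != 0; rv_nz : rv != 0 }.
Definition Rof (r : rr) : KL := C (ru r) / C (rv r).
Definition Sr (r : rr) : Rpol -> KL := Sy (x2 * Rof r).
HB.instance Definition _ r := GRing.RMorphism.copy (Sr r) (Sy (x2 * Rof r)).
Lemma Sr_eq0 r p : (Sr r p == 0) = (p == 0).
Proof.
apply/eqP/eqP => [|->]; last exact: rmorph0.
rewrite /Sr /Rof (Sform _ (rv_nz r) (leqnn (size p))) => /eqP.
rewrite mulf_eq0 invr_eq0 expf_eq0 (negPf (C_neq0 (rv_nz r))) andbF orbF tofrac_eq0 => /eqP h.
apply/polyP => i; rewrite coef0.
have [hi|hi] := ltnP i (size p); last by rewrite nth_default.
move: (congr1 (fun q : Rpol => q`_i) h); rewrite coef_poly hi coef0 => /eqP.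
by rewrite !mulf_eq0 !expf_eq0 (negPf (ru_nz r)) (negPf (rv_nz r)) !andbF !orbF => /eqP.
Qed.
Definition sig (r : rr) (f : KL) : KL :=
  subst2 x1 (x2 * Rof r) \n_(repr f) / subst2 x1 (x2 * Rof r) \d_(repr f).
Lemma sigE r p q : q != 0 -> sig r (tofrac p / tofrac q) = Sr r p / Sr r q.
Proof.
move=> hq; rewrite /sig !subst2E -/(Sr r _).
set f := tofrac p / tofrac q.
have hd : \d_(repr f) != 0 by [].
have e := fracE f.
have : tofrac p / tofrac q = tofrac \n_(repr f) / tofrac \d_(repr f) :> KL by rewrite -e.
move/eqP; rewrite eqr_div ?tofrac_eq0 // -!rmorphM tofrac_eq => /eqP h.
apply/eqP; rewrite eqr_div ?Sr_eq0 //.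
by rewrite -!rmorphM h.
Qed.
Lemma divB_gen (K : fieldType) (x y z w : K) : y != 0 -> w != 0 ->
  x / y - z / w = (x * w - z * y) / (y * w).
Proof. by move=> hy hw; rewrite -mulNr addf_div // mulNr. Qed.
Lemma frac_ex (f : KL) : exists p q, q != 0 /\ f = tofrac p / tofrac q.
Proof. have e := fracE f. eexists; eexists; split; last exact: e. exact: denom_ratioP. Qed.
Lemma sigB r : zmod_morphism (sig r).
Proof.
move=> f g.
have [a [b [hb ->]]] := frac_ex f; have [c [d [hd ->]]] := frac_ex g.
rewrite divB_gen ?tofrac_eq0 //.
rewrite -!(rmorphM (@tofrac Rpol)) -(rmorphB (@tofrac Rpol)) sigE ?mulf_neq0 //.
rewrite !sigE //; last by rewrite mulf_neq0.
by rewrite rmorphB !rmorphM divB_gen ?Sr_eq0.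
Qed.
Lemma sigM r : monoid_morphism (sig r).
Proof.
split.
  have -> : (1 : KL) = tofrac 1 / tofrac 1 by rewrite rmorph1 divr1.
  by rewrite sigE ?oner_neq0 // rmorph1 divr1.
move=> f g.
have [a [b [hb ->]]] := frac_ex f; have [c [d [hd ->]]] := frac_ex g.
rewrite mulf_div -!(rmorphM (@tofrac Rpol)) sigE ?mulf_neq0 //.
rewrite !sigE //; last by rewrite mulf_neq0.
by rewrite (rmorphM (Sr r) a c) (rmorphM (Sr r) b d) mulf_div.
Qed.
HB.instance Definition _ r := GRing.isZmodMorphism.Build KL KL (sig r) (sigB r).
HB.instance Definition _ r := GRing.isMonoidMorphism.Build KL KL (sig r) (sigM r).
Lemma sig_tofrac r p : sig r (tofrac p) = Sr r p.
Proof. by rewrite -[tofrac p]divr1 -(rmorph1 (@tofrac Rpol)) sigE ?oner_neq0 // rmorph1 divr1. Qed.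
Lemma sigC r u : sig r (C u) = C u.
Proof.
rewrite /C /= sig_tofrac /Sr /Sy /horner_morph map_polyC hornerC //.
Qed.
Lemma sig_x1 r : sig r x1 = x1.
Proof. exact: (sigC r 'X). Qed.
Lemma sig_x2 r : sig r x2 = x2 * Rof r.
Proof. by rewrite /x2 sig_tofrac /Sr /Sy /horner_morph map_polyX hornerX. Qed.
Lemma sig_Rof r s : sig r (Rof s) = Rof s.
Proof. by rewrite /Rof fmorph_div /= !sigC. Qed.
Lemma rm_ext (phi psi : {rmorphism KL -> KL}) :
  (forall u, phi (C u) = psi (C u)) -> phi x2 = psi x2 -> phi =1 psi.
Proof.
move=> hC hx f; have [p [q [hq ->]]] := frac_ex f.
rewrite !fmorph_div; suff h : forall p, phi (tofrac p) = psi (tofrac p) by rewrite !h.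
move=> a; rewrite tofrac_expand /Sy /horner_morph -!horner_map /= hx.
by rewrite -!map_poly_comp; congr (_.[_]); apply: eq_map_poly => u /=.
Qed.
Lemma sig_comp r s t f : Rof t = Rof r * Rof s -> sig r (sig s f) = sig t f.
Proof.
move=> h; apply: (rm_ext (phi := (sig r \o sig s)%FUN) (psi := sig t)) => [u|] /=.
  by rewrite !sigC.
by rewrite !sig_x2 rmorphM /= sig_x2 sig_Rof h mulrA.
Qed.
Lemma sig_one r f : Rof r = 1 -> sig r f = f.
Proof.
move=> h; have [p [q [hq ->]]] := frac_ex f.
by rewrite sigE // /Sr h mulr1 -!tofrac_expand.
Qed.
Lemma sig_eqR r s f : Rof r = Rof s -> sig r f = sig s f.
Proof. by move=> h; rewrite /sig h. Qed.
Definition rmul r s := RR (mulf_neq0 (ru_nz r) (ru_nz s)) (mulf_neq0 (rv_nz r) (rv_nz s)).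
Lemma Rof_mul r s : Rof (rmul r s) = Rof r * Rof s.
Proof. by rewrite /Rof /= !rmorphM /= mulf_div. Qed.
Definition rexp r n := RR (expf_neq0 n (ru_nz r)) (expf_neq0 n (rv_nz r)).
Lemma Rof_exp r n : Rof (rexp r n) = Rof r ^+ n.
Proof. by rewrite /Rof /= !rmorphXn /= expr_div_n. Qed.
Definition rinv r := RR (rv_nz r) (ru_nz r).
Lemma Rof_inv r : Rof (rinv r) = (Rof r)^-1.
Proof. by rewrite /Rof /= invf_div. Qed.
Lemma Rof_neq0 r : Rof r != 0.
Proof. by rewrite /Rof mulf_neq0 ?invr_eq0 ?C_neq0 ?ru_nz ?rv_nz. Qed.
Lemma iter_sig r n f : iter n (sig r) f = sig (rexp r n) f.
Proof.
elim: n => [|n IH] /=; first by rewrite sig_one // Rof_exp expr0.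
by rewrite IH (sig_comp (t := rexp r n.+1)) // !Rof_exp exprS.
Qed.
End Main.
Section Main2.
Variable F : fieldType.
Local Notation KL := (KL F).
Local Notation Rpol := (Rpol F).
Local Notation x1 := (x1 F).
Local Notation x2 := (x2 F).
Local Notation C := (@C F).
Local Notation rr := (rr F).
Lemma alg1 (K:fieldType) (X Y T : K) a b D N : X != 0 -> Y != 0 ->
 (T / X^+(b*D)) / (X * (Y * (X^+a / X^+b)))^+N = T * X^+(b*N) / (X^+(b*D + N + a*N) * Y^+N).
Proof.
move=> hX hY.
rewrite !exprMn exprVn -!exprM !exprD.
have h1 : X^+(b*D) != 0 by rewrite expf_neq0.
have h2 : X^+(b*N) != 0 by rewrite expf_neq0.
have h3 : X^+(a*N) != 0 by rewrite expf_neq0.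
have h4 : X^+N != 0 by rewrite expf_neq0.
have h5 : Y^+N != 0 by rewrite expf_neq0.
move: h1 h2 h3 h4 h5; move: (X^+(b*D)) (X^+(b*N)) (X^+(a*N)) (X^+N) (Y^+N) => x1 x2 x3 x4 x5 h1 h2 h3 h4 h5.
field. by rewrite h1 h2 h3 h4 h5.
Qed.
Lemma alg2 (K:fieldType) (X Y T : K) a b : X != 0 -> Y != 0 ->
 T / (X^+a * Y^+b) = T * (X^+b * Y^+a) / ((X * Y)^+(a+b)).
Proof.
move=> hX hY; rewrite exprMn !exprD.
have h1 : X^+a != 0 by rewrite expf_neq0.
have h2 : X^+b != 0 by rewrite expf_neq0.
have h3 : Y^+a != 0 by rewrite expf_neq0.
have h4 : Y^+b != 0 by rewrite expf_neq0.
move: h1 h2 h3 h4; move: (X^+a) (X^+b) (Y^+a) (Y^+b) => x1 x2 x3 x4 h1 h2 h3 h4.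
field. by rewrite h1 h2 h3 h4.
Qed.
Lemma x1_neq0 : x1 != 0.
Proof. by rewrite /x1 tofrac_eq0 polyC_eq0 polyX_eq0. Qed.
Lemma x2_neq0 : x2 != 0.
Proof. by rewrite /x2 tofrac_eq0 polyX_eq0. Qed.
Lemma CXn a : C ('X^a) = x1 ^+ a.
Proof. by rewrite rmorphXn. Qed.
Lemma laurent_mono (P : Rpol) a b : laurent (tofrac P / (x1^+a * x2^+b)).
Proof.
exists (P * ((('X^b : {poly F})%:P) * 'X^a)), (a+b).
rewrite (@alg2 _ x1 x2 (tofrac P) a b x1_neq0 x2_neq0).
congr (_ / _).
rewrite (rmorphM (@tofrac Rpol)) (rmorphM (@tofrac Rpol)) (rmorphXn (@tofrac Rpol)).
by rewrite -CXn.
Qed.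
Definition tw a b := RR (expf_neq0 a (monic_neq0 (monicX F))) (expf_neq0 b (monic_neq0 (monicX F))).
Lemma Rof_tw a b : Rof (tw a b) = x1^+a / x1^+b.
Proof. by rewrite /Rof /= !CXn. Qed.
Lemma laurent_tw a b f : laurent f -> laurent (sig (tw a b) f).
Proof.
case=> P [N ->].
rewrite fmorph_div /= sig_tofrac rmorphXn rmorphM /= sig_x1 sig_x2.
rewrite /Sr /Rof (Sform _ (rv_nz (tw a b)) (leqnn (size P))) /=.
rewrite !CXn -exprM.
set T := tofrac _.
rewrite (@alg1 _ x1 x2 T a b (size P) N x1_neq0 x2_neq0).
rewrite -CXn /T -(rmorphM (@tofrac Rpol)).
exact: laurent_mono.
Qed.
Lemma mmX M : (('X : {poly F})%:P * 'X : Rpol)^+M = (('X^M : {poly F})%:P * 'X^M).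
Proof. by rewrite exprMn rmorphXn. Qed.
Lemma coefMmm (p : Rpol) M i : (p * (('X^M : {poly F})%:P * 'X^M))`_(i+M) = p`_i * 'X^M.
Proof. by rewrite mulrA coefMXn ltnNge leq_addl /= addnK coefMC. Qed.
Lemma coefMmm2 (p : Rpol) (c : {poly F}) N k :
  (p * (c%:P * (('X^N : {poly F})%:P * 'X^N)))`_k = if (k < N)%N then 0 else p`_(k - N) * (c * 'X^N).
Proof. by rewrite mulrA -rmorphM mulrA coefMXn coefMC. Qed.
Lemma coefdiv (T B : Rpol) (c : {poly F}) M N i :
  T * (('X : {poly F})%:P * 'X)^+M = B * (c%:P * (('X : {poly F})%:P * 'X)^+N) -> c %| T`_i * 'X^M.
Proof.
rewrite !mmX => /(congr1 (fun p : Rpol => p`_(i+M))).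
rewrite coefMmm coefMmm2 => ->.
case: ifP => _; first exact: dvdp0.
by apply: dvdp_mull; apply: dvdp_mulr.
Qed.
Lemma alg3 (K:fieldType) (X Y Z T : K) D N : (N <= D)%N -> X != 0 -> Y != 0 -> Z != 0 ->
  T / Z^+D / (X * (Y * (1 / Z)))^+N = T / (Z^+(D-N) * (X*Y)^+N).
Proof.
move=> hND hX hY hZ.
rewrite -{1}(subnK hND) exprD !exprMn exprVn expr1n mul1r.
have h1 : Z^+(D-N) != 0 by rewrite expf_neq0.
have h2 : Z^+N != 0 by rewrite expf_neq0.
have h3 : X^+N != 0 by rewrite expf_neq0.
have h4 : Y^+N != 0 by rewrite expf_neq0.
move: h1 h2 h3 h4; move: (Z^+(D-N)) (Z^+N) (X^+N) (Y^+N) => x1 x2 x3 x4 h1 h2 h3 h4.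
field. by rewrite h1 h2 h3 h4.
Qed.
Definition qp (q : {poly F}) (hq : q != 0) j := RR (oner_neq0 {poly F}) (expf_neq0 j hq).
Lemma sig_qp q (hq : q != 0) j (P : Rpol) N :
  sig (qp hq j) (tofrac P / (x1*x2)^+N) =
  tofrac (\poly_(i < size P + N) (P`_i * 1^+i * (q^+j)^+(size P + N - i)) : Rpol)
    / (C ((q^+j)^+(size P + N - N)) * (x1*x2)^+N).
Proof.
rewrite fmorph_div /= sig_tofrac rmorphXn rmorphM /= sig_x1 sig_x2.
rewrite /Sr /Rof (Sform _ (rv_nz (qp hq j)) (leq_addr N (size P))) /= rmorph1.
rewrite (@alg3 _ x1 x2 (C (q^+j)) _ _ _ (leq_addl _ _) x1_neq0 x2_neq0 (C_neq0 (expf_neq0 _ hq))).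
by rewrite -(rmorphXn C).
Qed.
Lemma tofrac_x1x2 : x1 * x2 = tofrac ((('X : {poly F})%:P * 'X) : Rpol).
Proof. by rewrite (rmorphM (@tofrac Rpol)). Qed.
Lemma mm_neq0 : (('X : {poly F})%:P * 'X : Rpol) != 0.
Proof. by rewrite mulf_neq0 ?polyC_eq0 ?polyX_eq0. Qed.
Lemma frac_eq_poly (T B : Rpol) (c : {poly F}) N M : c != 0 ->
  tofrac T / (C c * (x1*x2)^+N) = tofrac B / (x1*x2)^+M ->
  T * (('X : {poly F})%:P * 'X)^+M = B * (c%:P * (('X : {poly F})%:P * 'X)^+N).
Proof.
move=> hc; rewrite tofrac_x1x2.
set mm := (('X : {poly F})%:P * 'X : Rpol).
change (C c) with (tofrac (c%:P : Rpol)).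
rewrite -!(rmorphXn (@tofrac Rpol)) -(rmorphM (@tofrac Rpol)).
move/eqP; rewrite eqr_div ?tofrac_eq0 ?mulf_neq0 ?expf_neq0 ?polyC_eq0 ?mm_neq0 //.
by rewrite -!(rmorphM (@tofrac Rpol)) tofrac_eq => /eqP.
Qed.
Lemma core q (hq : q != 0) (hc : coprimep q 'X) a n j :
  laurent a -> laurent (sig (qp hq n) a) -> (j <= n)%N -> laurent (sig (qp hq j) a).
Proof.
case=> P [N ->]; rewrite sig_qp => -[B [M]].
set D := (size P + N)%N.
set Tn := \poly_(i < D) _.
move/(frac_eq_poly (expf_neq0 _ (expf_neq0 _ hq))) => heq.
have hdiv := fun i => coefdiv i heq.
move=> hjn.
have hdj : forall i, (N <= i)%N -> (i < D)%N -> (q^+j)^+(i-N) %| P`_i.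
  move=> i hNi hiD.
  have h1 := hdiv i; rewrite /Tn coef_poly hiD expr1n mulr1 in h1.
  have e : (D - N = (i - N) + (D - i))%N by lia.
  rewrite e exprD -mulrA (mulrC (_ ^+ (D - i))) mulrA dvdp_mul2r ?expf_neq0 // in h1.
  rewrite Gauss_dvdpl in h1; last by rewrite coprimep_expr // !coprimep_expl.
  apply: dvdp_trans h1; rewrite -!exprM; apply: dvdp_exp2l.
  by rewrite leq_mul.
pose B' : Rpol := \poly_(i < D) (if (i < N)%N then P`_i * (q^+j)^+(N-i) else P`_i %/ (q^+j)^+(i-N)).
exists B', N.
rewrite sig_qp -/D.
set Tj := \poly_(i < D) _.
have -> : Tj = B' * ((q^+j)^+(D-N))%:P.
  apply/polyP => i; rewrite coefMC !coef_poly.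
  case: (ltnP i D) => hiD; last by rewrite mul0r.
  rewrite expr1n mulr1.
  case: (ltnP i N) => hiN.
    have e : (D - i = (N - i) + (D - N))%N by lia.
    by rewrite e exprD mulrA.
  rewrite -{1}(divpK (hdj i hiN hiD)) -mulrA -exprD.
  have e : (D - N = (i - N) + (D - i))%N by lia.
  by rewrite e.
rewrite (rmorphM (@tofrac Rpol)) /=.
rewrite -[tofrac ((q ^+ j ^+ (D - N))%:P)]/(C ((q ^+ j) ^+ (D - N))).
rewrite invfM mulrA mulfK // C_neq0 // !expf_neq0 //.
Qed.
Lemma alg_tw1 (K : fieldType) (X Z : K) s n : X != 0 -> Z != 0 ->
  (X^+s / Z)^+n = X^+(s*n) / X^+0 * (1 / Z^+n).
Proof. by move=> hX hZ; rewrite expr0 divr1 div1r exprMn exprVn -exprM. Qed.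
Lemma alg_tw2 (K : fieldType) (X Z : K) s n : X != 0 -> Z != 0 ->
  1 / Z^+n = X^+0 / X^+(s*n) * (X^+s / Z)^+n.
Proof.
by move=> hX hZ; rewrite expr0 exprMn exprVn -exprM !div1r mulrA mulVf ?expf_neq0 // mul1r.
Qed.
Lemma Rof_qp q (hq : q != 0) j : Rof (qp hq j) = 1 / C q ^+ j.
Proof. by rewrite /Rof /= rmorph1 rmorphXn. Qed.
Lemma CLtw q (hq : q != 0) (hc : coprimep q 'X) s (r : rr) a n j :
  Rof r = x1^+s / C q -> laurent a -> laurent (iter n (sig r) a) -> (j <= n)%N ->
  laurent (iter j (sig r) a).
Proof.
move=> hr ha; rewrite !iter_sig => hn hjn.
have hCq : C q != 0 by rewrite C_neq0.
have hq' : laurent (sig (qp hq n) a).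
  rewrite -(sig_comp (r := tw 0 (s*n)) (s := rexp r n)); first exact: laurent_tw.
  by rewrite Rof_qp Rof_tw Rof_exp hr (alg_tw2 s n x1_neq0 hCq).
have hj := core hc ha hq' hjn.
rewrite -(sig_comp (r := tw (s*j) 0) (s := qp hq j)); first exact: laurent_tw.
by rewrite Rof_qp Rof_tw Rof_exp hr (alg_tw1 s j x1_neq0 hCq).
Qed.
Lemma neq_e2 : (((0, -1) : int * int) == (0, 1)) = false.
Proof. by []. Qed.
Lemma ub_iff (k : int) (T T' : rr) x y (f : KL) :
  (forall g, mu k (0, 1) g = sig T g) -> (forall g, mu k (0, -1) g = sig T' g) ->
  upper_bound k (coll_e2 x y) f <->
  [/\ laurent f, (exists a, laurent a /\ f = iter x (sig T) a)
               & (exists b, laurent b /\ f = iter y (sig T') b)].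
Proof.
move=> h1 h2; split.
  case=> hf hv; split => //.
    have [a [ha ->]] := hv (0, 1); exists a; split => //.
    by rewrite /coll_e2 eqxx; apply: eq_iter.
  have [a [ha ->]] := hv (0, -1); exists a; split => //.
  by rewrite /coll_e2 neq_e2 eqxx; apply: eq_iter.
case=> hf [a [ha ea]] [b [hb eb]]; split => // v.
rewrite /in_mu_pow_image /coll_e2.
case: eqP => [->|_]; first by exists a; split => //; rewrite ea; apply: eq_iter.
case: eqP => [->|_]; first by exists b; split => //; rewrite eb; apply: eq_iter.
by exists f.
Qed.
Lemma sig_comp' (r s : rr) (f : KL) : sig r (sig s f) = sig (rmul r s) f.
Proof. by apply: sig_comp; rewrite Rof_mul. Qed.
Lemma alg_m1 (K : fieldType) (t t' A B : K) n : t != 0 -> A != 0 -> B != 0 ->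
  t * t' = B / A -> t^-1 * t'^+n = t'^+n.+1 * (A / B).
Proof.
move=> ht hA hB h.
have -> : t' = B / A / t by rewrite -h mulrC mulKf.
rewrite exprSr; move: ((B / A / t) ^+ n) => z; field.
by rewrite ht hA hB.
Qed.
Lemma alg_m2 (K : fieldType) (t t' A B : K) n : t != 0 -> A != 0 -> B != 0 ->
  t * t' = B / A -> (A / B * t)^+n * t'^+n = 1.
Proof.
move=> ht hA hB h; rewrite -exprMn.
have -> : A / B * t * t' = 1.
  by rewrite -(mulrA (A / B)) h; field; rewrite hA hB.
by rewrite expr1n.
Qed.
Lemma alg_m3 (K : fieldType) (t A B : K) : A != 0 -> B != 0 ->
  B / A * (A / B * t) = t.
Proof. by move=> hA hB; field; rewrite hA hB. Qed.
Lemma alg_m4 (K : fieldType) (t t' A B : K) n :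
  t * t' = B / A -> t * t'^+n.+1 = t'^+n * (B / A).
Proof. by move=> h; rewrite exprSr mulrA (mulrC t) -mulrA h. Qed.
End Main2.
Section Main3.
Variable F : fieldType.
Local Notation KL := (KL F).
Local Notation Rpol := (Rpol F).
Local Notation x1 := (x1 F).
Local Notation x2 := (x2 F).
Local Notation C := (@C F).
Local Notation rr := (rr F).
Local Notation tw := (@tw F).
Lemma main_gen (k : int) q (hq : q != 0) (hc : coprimep q 'X) (a b s s' : nat) (T T' : rr)
  (m1 m2 : nat) :
  Rof T = x1^+s / C q -> Rof T * Rof T' = x1^+b / x1^+a ->
  x1^+a / x1^+b * Rof T = x1^+s' / C q ->
  (forall g, mu k (0,1) g = sig T g) -> (forall g, mu k (0,-1) g = sig T' g) ->
  (1 <= m1)%N -> forall f : KL,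
    upper_bound k (coll_e2 m1 m2) f <->
    exists g : KL, upper_bound k (coll_e2 m1.-1 m2.+1) g /\ f = mu k (0, 1) g.
Proof.
move=> H1 H2 H3 hm1 hm2 hm f.
have hT := Rof_neq0 T.
have hA : x1 ^+ a != 0 by apply: expf_neq0; apply: x1_neq0.
have hB : x1 ^+ b != 0 by apply: expf_neq0; apply: x1_neq0.
have U1 := @ub_iff F k T T' m1 m2 f hm1 hm2.
rewrite U1; split.
- case=> hf [a0 [ha ea]] [b0 [hb eb]].
  pose g := iter m1.-1 (sig T) a0.
  have efg : f = sig T g by rewrite ea /g -iterS prednK.
  exists g; split; last by rewrite hm1.
  apply/(@ub_iff F k T T' m1.-1 m2.+1 g hm1 hm2); split.
  + apply: (CLtw hq hc H1 ha _ (leq_pred m1)); by rewrite -ea.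
  + by exists a0.
  + exists (sig (tw a b) b0); split; first exact: laurent_tw.
    have eg : g = sig (rinv T) f.
      rewrite efg sig_comp'; symmetry; apply: sig_one.
      rewrite Rof_mul Rof_inv; exact: mulVf hT.
    rewrite eg eb !iter_sig !sig_comp'; apply: sig_eqR.
    rewrite !Rof_mul Rof_inv !Rof_exp Rof_tw.
    exact: (alg_m1 _ hT hA hB H2).
- case=> g [hg ->]; move/(@ub_iff F k T T' m1.-1 m2.+1 g hm1 hm2): hg => [hg [a0 [ha ea]] [b0 [hb eb]]].
  rewrite hm1; split.
  + pose R := rmul (tw a b) T.
    have HR : Rof R = x1^+s' / C q by rewrite Rof_mul Rof_tw.
    have hR : laurent (iter m2.+1 (sig R) g).
      rewrite iter_sig eb iter_sig sig_comp' sig_one; first exact: hb.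
      rewrite Rof_mul !Rof_exp Rof_mul Rof_tw.
      exact: (alg_m2 _ hT hA hB H2).
    have := CLtw hq hc HR hg hR (isT : (1 <= m2.+1)%N) => /= h.
    have -> : sig T g = sig (tw b a) (sig R g).
      rewrite sig_comp'; apply: sig_eqR.
      rewrite Rof_mul !Rof_tw Rof_mul Rof_tw.
      exact: (esym (alg_m3 _ hA hB)).
    exact: laurent_tw.
  + exists a0; split; first exact: ha.
    by rewrite ea -iterS prednK.
  + exists (sig (tw b a) b0); split; first exact: laurent_tw.
    rewrite eb !iter_sig !sig_comp'; apply: sig_eqR.
    rewrite !Rof_mul !Rof_exp Rof_tw.
    exact: (alg_m4 _ H2).
Qed.
End Main3.
Section Main4.
Variable F : fieldType.
Local Notation KL := (KL F).
Local Notation Rpol := (Rpol F).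
Local Notation x1 := (x1 F).
Local Notation x2 := (x2 F).
Local Notation C := (@C F).
Local Notation rr := (rr F).
Local Notation tw := (@tw F).
Local Notation muimg := (@muimg F).
Local Notation mono := (@mono F).
Lemma mu_sig (k : int) v (r : rr) : muimg k v (1,0) = x1 -> muimg k v (0,1) = x2 * Rof r ->
  forall g, mu k v g = sig r g.
Proof. move=> h1 h2 g; rewrite /mu /sig h1 h2 /=; exact: erefl. Qed.
Lemma muimg10 (k : int) v : pairing (1,0) v = 0 -> muimg k v (1,0) = x1.
Proof. by move=> h; rewrite /muimg h oppr0 expr0z mulr1 /mono /= expr0z expr1z mulr1. Qed.
Lemma muimg01 (k : int) : muimg k (0,1) (0,1) = x2 * (1 + x1 ^ k)^-1.
Proof.
rewrite /muimg /omega_v /= mulr1 mulr0 oppr0 /mono /= expr0z expr1z mul1r mulr1.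
have -> : pairing (0, 1) (0, 1) = 1 by [].
by rewrite exprN1.
Qed.
Lemma muimg0m1 (k : int) : muimg k (0,-1) (0,1) = x2 * (1 + x1 ^ (- k)).
Proof.
rewrite /muimg /omega_v /= mulrN1 mulr0 oppr0 /mono /= expr0z expr1z mul1r mulr1.
have -> : pairing (0, 1) (0, -1) = -1 by [].
by rewrite opprK expr1z.
Qed.
Lemma q_props c : (0 < c)%N -> (1 + 'X^c : {poly F}) != 0 /\ coprimep (1 + 'X^c : {poly F}) 'X.
Proof.
move=> hc.
have hr : ~~ root (1 + 'X^c : {poly F}) 0.
  by rewrite rootE !hornerE expr0n eqn0Ngt hc /= addr0 oner_neq0.
split; last by rewrite coprimepX.
by apply: contra hr => /eqP ->; rewrite root0.
Qed.
Lemma Cq c : C (1 + 'X^c) = 1 + x1^+c.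
Proof. rewrite rmorphD rmorph1; congr (_ + _); exact: CXn. Qed.
Lemma G1 (K : fieldType) (X Q : K) : Q != 0 -> X != 0 -> 1 / Q * (Q / X) = 1 / X.
Proof. by move=> h1 h2; field; rewrite ?h1 ?h2 ?oner_neq0.  Qed.
Lemma G2 (K : fieldType) (X Q : K) : Q != 0 -> X / 1 * (1 / Q) = X / Q.
Proof. by move=> h1; field; rewrite ?h1 ?oner_neq0. Qed.
Lemma G3 (K : fieldType) (X : K) : X != 0 -> 1 + X^-1 = (1 + X) / X.
Proof. by move=> h1; field; rewrite ?h1 ?oner_neq0. Qed.
Lemma G4 (K : fieldType) (X : K) : X != 0 -> 1 + X != 0 -> (1 + X^-1)^-1 = X / (1 + X).
Proof. by move=> h1 h2; field; rewrite ?h1 ?h2 ?oner_neq0.  Qed.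
Lemma G5 (K : fieldType) (X Q : K) : Q != 0 -> X / Q * (Q / 1) = X / 1.
Proof. by move=> h1; field; rewrite ?h1 ?oner_neq0. Qed.
Lemma G6 (K : fieldType) (X Q : K) : Q != 0 -> X != 0 -> 1 / X * (X / Q) = 1 / Q.
Proof. by move=> h1 h2; field; rewrite ?h1 ?h2 ?oner_neq0.  Qed.
Lemma x1n_neq0 n : x1 ^+ n != 0.
Proof. apply: expf_neq0; exact: x1_neq0. Qed.
Lemma final (k : int) (m1 m2 : nat) :
  k != 0 -> (1 <= m1)%N ->
  forall f : KL,
    upper_bound k (coll_e2 m1 m2) f <->
    exists g : KL, upper_bound k (coll_e2 m1.-1 m2.+1) g /\ f = mu k (0, 1) g.
Proof.
case: k => [c|c] hk.
- have hc0 : (0 < c)%N by case: c hk.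
  have [hq hcp] := q_props hc0.
  have hCq : C (1 + 'X^c) != 0 := C_neq0 hq.
  pose T := RR (oner_neq0 {poly F}) hq.
  pose T' := RR hq (expf_neq0 c (monic_neq0 (monicX F))).
  apply: (@main_gen F (Posz c) _ hq hcp c 0 0 c T T').
  + by rewrite /Rof /= rmorph1 expr0.
  + rewrite /Rof /= rmorph1 expr0 CXn.
    exact: (G1 hCq (x1n_neq0 c)).
  + rewrite /Rof /= rmorph1 expr0.
    exact: (G2 _ hCq).
  + apply: mu_sig; first exact: muimg10.
    rewrite muimg01 /Rof /= rmorph1 Cq div1r.
    exact: erefl.
  + apply: mu_sig; first exact: muimg10.
    rewrite muimg0m1 /Rof /= Cq CXn -exprnN.
    rewrite (G3 (x1n_neq0 c)); exact: erefl.
- have [hq hcp] := q_props (ltn0Sn c).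
  have hCq : C (1 + 'X^(c.+1)) != 0 := C_neq0 hq.
  pose T := RR (expf_neq0 c.+1 (monic_neq0 (monicX F))) hq.
  pose T' := RR hq (oner_neq0 {poly F}).
  apply: (@main_gen F (Negz c) _ hq hcp 0 c.+1 c.+1 0 T T').
  + by rewrite /Rof /= CXn.
  + rewrite /Rof /= rmorph1 expr0 CXn.
    exact: (G5 _ hCq).
  + rewrite /Rof /= expr0 CXn.
    exact: (G6 hCq (x1n_neq0 c.+1)).
  + apply: mu_sig; first exact: muimg10.
    rewrite muimg01 /Rof /= Cq CXn NegzE -exprnN.
    have h1 : 1 + x1 ^+ c.+1 != 0 by rewrite -Cq.
    rewrite (G4 (x1n_neq0 c.+1) h1); exact: erefl.
  + apply: mu_sig; first exact: muimg10.
    rewrite muimg0m1 /Rof /= Cq rmorph1 divr1 NegzE opprK.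
    exact: erefl.
Qed.
End Main4.

Theorem proposition3p7 (F : fieldType) (k : int) (m1 m2 : nat) :
  k != 0 -> (1 <= m1)%N ->
  forall f : KL F,
    upper_bound k (coll_e2 m1 m2) f <->
    exists g : KL F, upper_bound k (coll_e2 m1.-1 m2.+1) g /\ f = mu k (0, 1) g.
Proof.
move=> hk hm f; exact: (@final F k m1 m2 hk hm f).
Qed.
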